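(* Consider a repeater chain in the model described in the context with $M+N+1$ nodes labelled $1,\dots,M+N+1$ and elementary-link fidelity $F$. Suppose nodes $1,\dots,M$ are at fixed locations with fixed distances between consecutive ones, nodes $M$ and $M+N+1$ are a distance $L$ apart, and the $N$ repeater nodes $M+1,\dots,M+N$ are placed along a straight line between them. Let $\ell_i\ge0$ be the distance between nodes $M+i-1$ and $M+i$ for $i=1,\dots,N+1$, with $\sum_i\ell_i=L$. Suppose nodes $1,\dots,M-1$ have memory coherence time $T$, while nodes $M,M+1,\dots,M+N+1$ have perfect quantum memory. Then the secret-key rate $\mathrm{SKR}$ of the chain, as a function of $(\ell_1,\dots,\ell_{N+1})$, is maximal when $\ell_i=L/(N+1)$ for all $i$.
   Context: Repeater-chain model (swap-ASAP, synchronized attempts). Edge $j$ connects nodes $j$ and $j+1$ and has length $l_j\ge0$ (km). Entanglement generation proceeds in synchronized rounds of duration $t_{\mathrm{att}}=\frac1c\max_jl_j$, $c=200{,}000$ km/s. In each round, each edge not yet successful attempts, succeeding independently with probability $p_j=10^{-\alpha l_j/10}$, $\alpha=0.2\ \mathrm{km}^{-1}$; the number of rounds $X_j$ until edge $j$ succeeds is geometric on $\{1,2,\dots\}$ with parameter $p_j$, independently across edges. Edge $j$ completes at time $t_j=t_{\mathrm{att}}X_j$, and the chain completes at $T_{\mathrm{done}}=t_{\mathrm{att}}\max_jX_j$; the entangling rate is $R=1/\mathbb E[T_{\mathrm{done}}]$. Each successful edge produces the two-qubit Werner state $W_{w_0}=w_0|\phi^+\rangle\langle\phi^+|+(1-w_0)\mathbb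 1/4$ with $w_0=(4F-1)/3$. Each repeater node (every node other than the two end nodes) performs entanglement swapping as soon as both of its links exist; meanwhile a stored qubit $k$ held for time $t$ in a memory with coherence time $T$ undergoes $\rho\mapsto e^{-t/T}\rho+(1-e^{-t/T})\frac{\mathbb 1_2}{2}\otimes\mathrm{Tr}_k\rho$; a node with perfect memory undergoes no such noise, and end nodes measure immediately and suffer no memory noise. Consequently, given the completion times, the end-to-end state is the Werner state with parameter $w_{e2e}=w_0^{K}\prod_{i}e^{-|t_i-t_{i-1}|/T}$, where $K$ is the number of edges and the product is over repeater nodes $i$ with imperfect memory (node $i$ sitting between edges $i-1$ and $i$); the delivered state (not conditioned on completion times) is the Werner state with parameter $\mathbb E[w_{e2e}]$. Its quantum bit error rates are $Q_X=Q_Z=(1-\mathbb E[w_{e2e}])/2$, the secret-key fraction is $\mathrm{SKF}=\max(0,1-h(Q_X)-h(Q_Z))$ with $h(x)=-x\log_2x-(1-x)\log_2(1-x)$, and the secret-key rate is $\mathrm{SKR}=R\cdot\mathrm{SKF}$. *)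

(* Defs.v *)
From HB Require Import structures.
From mathcomp Require Import all_boot all_order all_algebra.
From mathcomp Require Import all_classical all_reals all_analysis.
Set Implicit Arguments. Unset Strict Implicit. Unset Printing Implicit Defensive.
Import Order.TTheory GRing.Theory Num.Theory.
Local Open Scope ring_scope.

Section RepeaterChain.
Variable R : realType.

(* speed of light in fibre, km/s *)
Definition light_speed : R := 2 * 10 ^+ 5.
(* attenuation alpha = 0.2 per km *)
Definition alpha_att : R := 2 / 10.

Definition succ_prob (l : R) : R := 10 `^ (- (alpha_att * l / 10)).

Definition geom_pmf (p : R) (n : nat) : R :=
  if n is k.+1 then p * (1 - p) ^+ k else 0.

Variable K : nat. (* number of edges; nodes are 0..K (0-based) *)

Definition t_att (len : 'I_K -> R) : R :=
  (\big[Num.max/0]_(j < K) len j) / light_speed.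

Definition joint_pmf (len : 'I_K -> R) (x : {ffun 'I_K -> nat}) : R :=
  \prod_(j < K) geom_pmf (succ_prob (len j)) (x j).

(* expectation of a NONNEGATIVE function of (X_0,...,X_{K-1}) *)
Definition expect (len : 'I_K -> R) (f : {ffun 'I_K -> nat} -> R) : \bar R :=
  (\esum_(x in [set: {ffun 'I_K -> nat}]) (joint_pmf len x * f x)%:E)%E.

Definition T_done (len : 'I_K -> R) (x : {ffun 'I_K -> nat}) : R :=
  t_att len * (\max_(j < K) x j)%:R.

Definition ent_rate (len : 'I_K -> R) : R := (fine (expect len (T_done len)))^-1.

Definition prev_edge (i : 'I_K) : 'I_K :=
  Ordinal (leq_ltn_trans (leq_pred i) (ltn_ord i)).

(* Repeater node i (0-based, 1 <= i <= K-1) sits between edges i-1 and i.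
   [imperfect i] says node i (0-based label) has imperfect memory. *)
Definition decay (T : R) (imperfect : nat -> bool) (len : 'I_K -> R)
  (x : {ffun 'I_K -> nat}) : R :=
  \prod_(i < K | (0 < i)%N && imperfect i)
     expR (- `|t_att len * (x i)%:R - t_att len * (x (prev_edge i))%:R| / T).

Definition werner_param (F : R) : R := (4 * F - 1) / 3.

Definition mean_w (F T : R) (imperfect : nat -> bool) (len : 'I_K -> R) : R :=
  werner_param F ^+ K * fine (expect len (decay T imperfect len)).

Definition log2 (x : R) : R := ln x / ln 2.
Definition bin_entropy (x : R) : R := - x * log2 x - (1 - x) * log2 (1 - x).

Definition SKF (F T : R) (imperfect : nat -> bool) (len : 'I_K -> R) : R :=
  let Q := (1 - mean_w F T imperfect len) / 2 in
  Num.max 0 (1 - bin_entropy Q - bin_entropy Q).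

Definition SKR (F T : R) (imperfect : nat -> bool) (len : 'I_K -> R) : R :=
  ent_rate len * SKF F T imperfect len.

End RepeaterChain.

(* Chain of the theorem: edges 1..M-1 (fixed lengths d) followed by
   edges of lengths l_1..l_{N+1} between nodes M and M+N+1. *)
Definition chain_len (R : realType) (m n : nat) (d : 'I_m -> R) (l : 'I_n -> R)
  (j : 'I_(m + n)) : R :=
  match fintype.split j with inl a => d a | inr b => l b end.

(* nodes 1..M-1 (1-based), i.e. 0..M-2 (0-based), have imperfect memory *)
Definition imperfect_first (M : nat) (i : nat) : bool := (i < M.-1)%N.

(* Main.v *)
Require Import Defs.
From HB Require Import structures.
From mathcomp Require Import all_boot all_order all_algebra.
From mathcomp Require Import all_classical all_reals all_analysis.
From mathcomp Require Import lra ring zify.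
Import Order.TTheory GRing.Theory Num.Theory.
Local Open Scope ring_scope.

Set Implicit Arguments. Unset Strict Implicit. Unset Printing Implicit Defensive.
Import numFieldNormedType.Exports.

Section Ana.
Variable R : realType.

Lemma is_derive_phi (b c m x : R) (k : nat) :
  is_derive x 1 (fun l : R => (1 - (1 - expR (- (b * l))) ^+ k) * expR (c * (l - m)))
   ((1 - (1 - expR (- (b * x))) ^+ k) * (c * expR (c * (x - m))) -
    expR (c * (x - m)) * (k%:R * (1 - expR (- (b * x))) ^+ k.-1 * (b * expR (- (b * x))))).
Proof.
have hl : is_derive x 1 (fun l : R => - (b * l)) (- b).
  have h : is_derive x 1 (fun l : R => b * l) b.
    have := is_deriveZ b (@is_derive_id _ R x 1).
    by rewrite /GRing.scale /= mulr1.
  exact: (is_deriveN h).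
have h1 : is_derive x 1 (fun l : R => expR (- (b * l))) (- b * expR (- (b * x))).
  have := @is_derive1_comp _ expR (fun l => - (b * l)) x _ _ (is_derive_expR _) hl.
  by rewrite mulrC.
have h2 : is_derive x 1 (fun l : R => c * (l - m)) c.
  have := is_deriveZ c (is_deriveB (@is_derive_id _ R x 1) (@is_derive_cst _ R R m x 1)).
  by rewrite /GRing.scale /= subr0 mulr1.
have h3 : is_derive x 1 (fun l : R => expR (c * (l - m))) (c * expR (c * (x - m))).
  have := @is_derive1_comp _ expR (fun l => c * (l - m)) x _ _ (is_derive_expR _) h2.
  by rewrite mulrC.
have h5 : is_derive x 1 (fun l : R => 1 - expR (- (b * l))) (b * expR (- (b * x))).
  have := is_deriveB (@is_derive_cst _ R R 1 x 1) h1.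
  by rewrite sub0r mulNr opprK.
have h6 := is_deriveX k h5.
rewrite exprfctE in h6.
have h4 : is_derive x 1 (fun l : R => 1 - (1 - expR (- (b * l))) ^+ k)
   (- (k%:R * (1 - expR (- (b * x))) ^+ k.-1 * (b * expR (- (b * x)))) ).
  have := is_deriveB (@is_derive_cst _ R R 1 x 1) h6.
  move=> h.
  have h' : is_derive x 1 (fun l : R => 1 - (1 - expR (- (b * l))) ^+ k)
     (0 - (k%:R * (1 - expR (- (b * x))) ^+ k.-1) *: (b * expR (- (b * x)))) by exact h.
  rewrite /GRing.scale /= sub0r in h'.
  exact h'.
have h := is_deriveM h4 h3.
rewrite /GRing.scale /= mulrN in h.
exact h.
Qed.

Lemma ratio_mono (u v : R) (k : nat) : 0 <= u -> u <= v ->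
  u ^+ k.-1 * \sum_(i < k) v ^+ i <= v ^+ k.-1 * \sum_(i < k) u ^+ i.
Proof.
move=> u0 uv; rewrite !mulr_sumr; apply: ler_sum => i _.
have v0 : 0 <= v := le_trans u0 uv.
have hi : (i <= k.-1)%N by move: (ltn_ord i); case: k i => [|k] i //=.
rewrite -(subnKC hi) !exprD.
have A : u ^+ (k.-1 - i) <= v ^+ (k.-1 - i) by apply: lerXn2r; rewrite ?nnegrE.
have U := exprn_ge0 i u0; have V := exprn_ge0 i v0.
have UV := mulr_ge0 U V.
nra.
Qed.

Definition gfun (b : R) (k : nat) (l : R) := 1 - (1 - expR (- (b * l))) ^+ k.

Lemma gfunE (b : R) (k : nat) (l : R) :
  gfun b k l = expR (- (b * l)) * \sum_(i < k) (1 - expR (- (b * l))) ^+ i.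
Proof.
rewrite /gfun; set u := 1 - expR (- (b * l)).
have -> : expR (- (b * l)) = 1 - u by rewrite /u opprB addrC subrK.
have := subrX1 u k; move=> h.
by rewrite -opprB h -mulNr opprB.
Qed.

Lemma gfun_ge0 (b : R) k l : 0 <= b -> 0 <= l -> 0 <= gfun b k l.
Proof.
move=> b0 l0; rewrite /gfun subr_ge0 exprn_ile1 //.
  rewrite subr_ge0 expR_le1 oppr_le0; exact: mulr_ge0.
Qed.

Lemma tangent_exp (b m : R) (k : nat) : 0 < b -> 0 <= m -> (0 < k)%N ->
  exists c, forall l, 0 <= l -> gfun b k l * expR (c * (l - m)) <= gfun b k m.
Proof.
move=> b0 m0 k0.
pose e l := expR (- (b * l)).
pose u l := 1 - e l.
pose S l := \sum_(i < k) (u l) ^+ i.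
have e0 l : 0 < e l by exact: expR_gt0.
have e1 l : 0 <= l -> e l <= 1.
  by move=> l0; rewrite /e expR_le1 oppr_le0 mulr_ge0 // ltW.
have u0 l : 0 <= l -> 0 <= u l by move=> /e1; rewrite /u subr_ge0.
have S1 l : 0 <= l -> 1 <= S l.
  move=> l0; rewrite /S -(prednK k0) big_ord_recl expr0 lerDl; apply: sumr_ge0 => i _; exact: exprn_ge0 (u0 _ l0).
have Spos l : 0 <= l -> 0 < S l by move=> /S1 h; exact: lt_le_trans ltr01 h.
have umono x y : x <= y -> u x <= u y.
  move=> xy; by rewrite /u /e lerD2l lerN2 ler_expR lerN2 ler_pM2l. 
pose c := b * k%:R * (u m) ^+ k.-1 / S m.
exists c.
pose phi l := gfun b k l * expR (c * (l - m)).
have dphi (x : R) : is_derive x (1 : R) phi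
   ((1 - (1 - expR (- (b * x))) ^+ k) * (c * expR (c * (x - m))) -
    expR (c * (x - m)) * (k%:R * (1 - expR (- (b * x))) ^+ k.-1 * (b * expR (- (b * x))))).
  exact: is_derive_phi.
have dphiE (x : R) : 0 <= x -> derive1 phi x = expR (c * (x - m)) * (b * k%:R * e x / S m) *
    ((u m) ^+ k.-1 * S x - (u x) ^+ k.-1 * S m).
  move=> x0; rewrite derive1E (@derive_val _ _ _ _ _ _ _ (dphi x)).
  have := gfunE b k x; rewrite /gfun => ->.
  rewrite -/(e x) -/(u x) -/(S x) /c.
  have := Spos _ m0; have := Spos _ x0 => h1 h2.
  field; by rewrite gt_eqF.
have der (x : R) : derivable phi x 1 by have [] := dphi x.
have phim : phi m = gfun b k m by rewrite /phi subrr mulr0 expR0 mulr1.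
move=> l l0; rewrite -/(phi l) -phim.
have [lm|ml] := leP l m.
  apply: (@ger0_derive1_ndecr _ phi 0 m _ _ _ l m l0 lm (lexx m)).
  - by move=> y _; have [] := dphi y.
  - move=> y; rewrite in_itv /= => /andP[y0 ym].
    rewrite dphiE; last exact: ltW. apply: mulr_ge0.
      apply: mulr_ge0; first exact: expR_ge0.
      apply: divr_ge0; last exact: ltW (Spos _ m0).
      apply: mulr_ge0; last exact: ltW (e0 y).
      by apply: mulr_ge0; [exact: ltW|exact: ler0n].
    rewrite subr_ge0; apply: ratio_mono; first exact: u0 (ltW y0).
    exact: umono (ltW ym).
  - by apply: derivable_within_continuous => y _; have [] := dphi y.
apply: (@ler0_derive1_nincry _ phi m _ _ _ m l (lexx m) (ltW ml)).
- by move=> y _; have [] := dphi y.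
- move=> y; rewrite in_itv /= andbT => my.
  have y0 : 0 <= y by exact: le_trans m0 (ltW my).
  rewrite dphiE //; apply: mulr_ge0_le0.
    apply: mulr_ge0; first exact: expR_ge0.
    apply: divr_ge0; last exact: ltW (Spos _ m0).
    apply: mulr_ge0; last exact: ltW (e0 y).
    by apply: mulr_ge0; [exact: ltW|exact: ler0n].
  rewrite subr_le0; apply: ratio_mono; first exact: u0 m0.
  exact: umono (ltW my).
- apply: continuous_subspaceT => y.
  by apply: differentiable_continuous; rewrite -derivable1_diffP; have [] := dphi y.
Qed.

Lemma jensen_g (b L : R) (k n : nat) (l : 'I_n.+1 -> R) : 0 < b ->
  (forall i, 0 <= l i) -> \sum_i l i = L ->
  \prod_i gfun b k (l i) <= gfun b k (L / n.+1%:R) ^+ n.+1.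
Proof.
move=> b0 l0 sL.
have L0 : 0 <= L by rewrite -sL; apply: sumr_ge0.
set m := L / n.+1%:R.
have m0 : 0 <= m by apply: divr_ge0 => //; exact: ler0n.
case: k => [|k].
  have g0 x : gfun b 0 x = 0 by rewrite /gfun expr0 subrr.
  by rewrite g0 (eq_bigr (fun=> 0)) ?prodr_const ?card_ord.
have [c hc] := @tangent_exp b m k.+1 b0 m0 (ltn0Sn k).
have step i : gfun b k.+1 (l i) <= gfun b k.+1 m * expR (- (c * (l i - m))).
  have := hc _ (l0 i); rewrite expRN -ler_pdivlMr ?expR_gt0 //.
have hp : \prod_i gfun b k.+1 (l i) <= \prod_(i < n.+1) (gfun b k.+1 m * expR (- (c * (l i - m)))).
  by apply: ler_prod => i _; rewrite step andbT; apply: gfun_ge0 => //; exact: ltW.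
apply: le_trans hp _.
rewrite big_split /= prodr_const card_ord -expR_sum.
have -> : \sum_(i < n.+1) - (c * (l i - m)) = c * (n.+1%:R * m - \sum_i l i).
  transitivity (\sum_(i < n.+1) (c * m - c * l i)).
    by apply: eq_bigr => i _; ring.
  by rewrite sumrB sumr_const card_ord -mulr_sumr mulr_natl; ring.
have -> : n.+1%:R * m = L by rewrite /m; field.
by rewrite sL subrr mulr0 expR0 mulr1.
Qed.

End Ana.

Section Ent.
Variable R : realType.

Lemma phi_tangent (x y : R) : 0 < x -> 0 < y -> - (x * ln x) <= - (x * ln y) - x + y.
Proof.
move=> x0 y0.
have yx0 : 0 < y / x by exact: divr_gt0.
have h := expR_ge1Dx (ln (y / x)).
rewrite lnK ?posrE // ln_div ?posrE // in h.
have := ler_wpM2l (ltW x0) h.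
rewrite mulrDr mulr1 mulrCA divff ?gt_eqF // mulr1 => h2.
lra.
Qed.

Definition Hn (x : R) := - (x * ln x) - (1 - x) * ln (1 - x).

Lemma bin_entropyE (x : R) : bin_entropy x = Hn x / ln 2.
Proof. rewrite /bin_entropy /Hn /log2; ring. Qed.

Lemma Hn_ge0 (x : R) : 0 <= x <= 1 -> 0 <= Hn x.
Proof.
case/andP=> x0 x1; rewrite /Hn.
have a : ln x <= 0 := ln_le0 x1.
have b : ln (1 - x) <= 0 by apply: ln_le0; lra.
have c : 0 <= 1 - x by lra.
have := mulr_ge0_le0 x0 a; have := mulr_ge0_le0 c b; lra.
Qed.

Lemma Hn_mono (x y : R) : 0 <= x -> x <= y -> y <= 1 / 2 -> Hn x <= Hn y.
Proof.
move=> x0 xy y2.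
have [->|xpos] := eqVneq x 0.
  have -> : Hn 0 = 0 by rewrite /Hn subr0 ln1; ring.
  apply: Hn_ge0; lra.
have xp : 0 < x by rewrite lt_neqAle eq_sym xpos.
have yp : 0 < y by exact: lt_le_trans xp xy.
have x1 : 0 < 1 - x by lra.
have y1 : 0 < 1 - y by lra.
have t1 := phi_tangent xp yp.
have t2 := phi_tangent x1 y1.
have lnyy : ln y <= ln (1 - y) by rewrite ler_ln ?posrE //; lra.
rewrite /Hn.
have : (x - y) * (ln (1 - y) - ln y) <= 0.
  by apply: mulr_le0_ge0; lra.
nra.
Qed.

Lemma bin_entropy_sym (x : R) : bin_entropy (1 - x) = bin_entropy x.
Proof. rewrite /bin_entropy (_ : 1 - (1 - x) = x); [ring | ring]. Qed.

Lemma skf_mono (w1 w2 : R) : `|w1| <= `|w2| -> `|w2| <= 1 ->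
  Num.max 0 (1 - bin_entropy ((1 - w1) / 2) - bin_entropy ((1 - w1) / 2)) <=
  Num.max 0 (1 - bin_entropy ((1 - w2) / 2) - bin_entropy ((1 - w2) / 2)).
Proof.
move=> h12 h2.
have habs (w : R) : bin_entropy ((1 - w) / 2) = bin_entropy ((1 - `|w|) / 2).
  have [w0|w0] := leP 0 w; first by rewrite ger0_norm.
  rewrite ltr0_norm //.
  have -> : (1 - w) / 2 = 1 - (1 - - w) / 2 by rewrite opprK; field.
  by rewrite bin_entropy_sym.
rewrite (habs w1) (habs w2).
have ln2 : 0 < ln (2 : R) by apply: ln_gt0; lra.
have : bin_entropy ((1 - `|w2|) / 2) <= bin_entropy ((1 - `|w1|) / 2).
  rewrite !bin_entropyE ler_pM2r ?invr_gt0 //.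
  have := normr_ge0 w1; have := normr_ge0 w2 => n1 n2.
  apply: Hn_mono; lra.
move=> hle.
rewrite ge_max le_max lexx /=; rewrite le_max; apply/orP; right; lra.
Qed.

End Ent.

Local Open Scope classical_set_scope.

Section Esum.
Variable R : realType.
Local Open Scope ereal_scope.

Lemma esumZl (T : choiceType) (S : set T) (c : R) (a : T -> \bar R) :
  (0 <= c)%R -> (forall x, 0 <= a x) ->
  \esum_(i in S) (c%:E * a i) = c%:E * \esum_(i in S) a i.
Proof.
move=> c0 a0.
have [->|cpos] := eqVneq c 0%R.
  by rewrite mul0e esum1 // => i _; rewrite mul0e.
have cp : (0 < c)%R by rewrite lt0r cpos c0.
rewrite /esum -ereal_sup_pZl //; congr ereal_sup.
apply/seteqP; split => x /=.
- case=> A hA <-; exists (\sum_(i \in A) a i); first by exists A.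
  case: hA => finA _.
  by rewrite !fsbig_finite // ge0_sume_distrr.
- case=> y [A hA <-] <-; exists A => //.
  case: hA => finA _.
  by rewrite !fsbig_finite // ge0_sume_distrr.
Qed.

Lemma esum_pair (A B : choiceType) (a : A -> B -> \bar R) :
  (forall x y, 0 <= a x y) ->
  \esum_(p in [set: A * B]) a p.1 p.2 = \esum_(x in [set: A]) \esum_(y in [set: B]) a x y.
Proof.
move=> a0; rewrite esum_esum //; congr esum.
by apply/seteqP; split => // -[x y].
Qed.

Lemma bijTT_can (A B : Type) (f : A -> B) (g : B -> A) :
  cancel f g -> cancel g f -> set_bij [set: A] [set: B] f.
Proof.
move=> fK gK; split => //.
- by move=> x y _ _ /(can_inj fK).
- by move=> y _; exists (g y) => //; rewrite gK.
Qed.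

Lemma esum_swap (A B : choiceType) (a : A -> B -> \bar R) :
  (forall x y, 0 <= a x y) ->
  \esum_(x in [set: A]) \esum_(y in [set: B]) a x y =
  \esum_(y in [set: B]) \esum_(x in [set: A]) a x y.
Proof.
move=> a0; rewrite -esum_pair // -esum_pair //.
rewrite (reindex_esum [set: B * A] [set: A * B] (fun p => (p.2, p.1))) //.
by apply: (@bijTT_can _ _ _ (fun p => (p.2, p.1))) => -[].
Qed.


Definition cons_ff (K : nat) (n : nat) (y : {ffun 'I_K -> nat}) : {ffun 'I_K.+1 -> nat} :=
  [ffun i => if unlift ord0 i is Some j then y j else n].

Lemma cons_ff0 K n (y : {ffun 'I_K -> nat}) : cons_ff n y ord0 = n.
Proof. by rewrite ffunE unlift_none. Qed.

Lemma cons_ffS K n (y : {ffun 'I_K -> nat}) j : cons_ff n y (lift ord0 j) = y j.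
Proof. by rewrite ffunE liftK. Qed.

Definition uncons_ff (K : nat) (x : {ffun 'I_K.+1 -> nat}) : nat * {ffun 'I_K -> nat} :=
  (x ord0, [ffun j => x (lift ord0 j)]).

Lemma cons_ff_bij K : set_bij [set: nat * {ffun 'I_K -> nat}] [set: {ffun 'I_K.+1 -> nat}]
  (fun p => cons_ff p.1 p.2).
Proof.
apply: (@bijTT_can _ _ _ (@uncons_ff K)).
- move=> [n y]; rewrite /uncons_ff /= cons_ff0; congr pair.
  by apply/ffunP => j; rewrite ffunE cons_ffS.
- move=> x; apply/ffunP => i; rewrite ffunE.
  case: unliftP => [j ->|->] /=; first by rewrite ffunE.
  by [].
Qed.

Lemma esum_set1_ff (a : {ffun 'I_0 -> nat} -> \bar R) (x0 : {ffun 'I_0 -> nat}) :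
  0 <= a x0 -> \esum_(x in [set: {ffun 'I_0 -> nat}]) a x = a x0.
Proof.
move=> a0.
have -> : [set: {ffun 'I_0 -> nat}] = [set x0].
  by apply/seteqP; split => x //= _; apply/ffunP => -[].
by rewrite esum_set1.
Qed.

Lemma esum_prod_ffun (K : nat) (f : 'I_K -> nat -> R) (s : 'I_K -> R) :
  (forall j n, (0 <= f j n)%R) ->
  (forall j, \esum_(n in [set: nat]) (f j n)%:E = (s j)%:E) ->
  \esum_(x in [set: {ffun 'I_K -> nat}]) (\prod_j f j (x j))%:E = (\prod_j s j)%:E.
Proof.
elim: K f s => [|K IH] f s f0 fs.
  by rewrite (@esum_set1_ff _ [ffun => 0%N]) ?big_ord0 // lee_fin ler01.
have s0 j : (0 <= s j)%R by rewrite -lee_fin -fs; apply: esum_ge0 => n _; rewrite lee_fin.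
rewrite (reindex_esum _ _ _ _ (cons_ff_bij K)).
transitivity (\esum_(p in [set: nat * {ffun 'I_K -> nat}])
   ((f ord0 p.1)%:E * (\prod_(j < K) f (lift ord0 j) (p.2 j))%:E)).
  apply: eq_esum => -[n y] _ /=; rewrite big_ord_recl cons_ff0 EFinM.
  by congr (_ * (_)%:E); apply: eq_bigr => j _; rewrite cons_ffS.
rewrite (esum_pair (a := fun n (y : {ffun 'I_K -> nat}) => ((f ord0 n)%:E * (\prod_(j < K) f (lift ord0 j) (y j))%:E))); last first.
  by move=> n y; apply: mule_ge0; rewrite lee_fin //; apply: prodr_ge0.
transitivity (\esum_(n in [set: nat]) ((\prod_(j < K) s (lift ord0 j))%:E * (f ord0 n)%:E)).
  apply: eq_esum => n _ /=; rewrite esumZl //; last by move=> y; rewrite lee_fin; apply: prodr_ge0.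
  by rewrite (IH (fun j => f (lift ord0 j)) (fun j => s (lift ord0 j))) // muleC.
rewrite esumZl; [| by apply: prodr_ge0 | by move=> n; rewrite lee_fin].
by rewrite fs -EFinM big_ord_recl mulrC.
Qed.


Lemma geom_ge0 (p : R) n : (0 <= p <= 1)%R -> (0 <= geom_pmf p n)%R.
Proof.
case/andP=> p0 p1; case: n => [|n] /=; first exact: lexx.
by apply: mulr_ge0 => //; apply: exprn_ge0; rewrite subr_ge0.
Qed.

Lemma sum_geom (p : R) k : (\sum_(a < k.+1) geom_pmf p a = 1 - (1 - p) ^+ k)%R.
Proof.
elim: k => [|k IH]; first by rewrite big_ord1 /= expr0 subrr.
rewrite big_ord_recr /= IH exprS; ring.
Qed.

Lemma esum_geom_le (p : R) k : (0 <= p <= 1)%R ->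
  \esum_(n in [set: nat]) (geom_pmf p n * (n <= k)%:R)%:E = (1 - (1 - p) ^+ k)%:E.
Proof.
move=> hp.
have a0 n : 0 <= (geom_pmf p n * (n <= k)%:R)%:E.
  by rewrite lee_fin; apply: mulr_ge0; [exact: geom_ge0|exact: ler0n].
rewrite (esumID `I_k.+1); last by move=> n _; exact: a0.
rewrite [X in _ + X]esum1 ?adde0; last first.
  move=> n [_ /=]; rewrite ltnS => /negP /negbTE ->; by rewrite mulr0.
rewrite setTI esum_fset; [| exact: finite_II | by move=> i _; exact: a0].
rewrite -fsbig_ord -sum_geom sumEFin; congr (_%:E).
by apply: eq_bigr => i _; rewrite -ltnS ltn_ord mulr1.
Qed.

Lemma esum_geom (p : R) : (0 < p <= 1)%R ->
  \esum_(n in [set: nat]) (geom_pmf p n)%:E = 1%:E.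
Proof.
case/andP => p0 p1.
have hp : (0 <= p <= 1)%R by rewrite ltW.
rewrite -nneseries_esumT; last by move=> n; rewrite lee_fin geom_ge0.
have Hs : series (geom_pmf p) @ \oo --> (1%R : R).
  rewrite -cvg_shiftS.
  have -> : [sequence series (geom_pmf p) n.+1]_n = series (geometric p (1 - p)%R).
    apply/funext => n /=; rewrite /series /= big_nat_recl //= add0r.
    by apply: eq_bigr => i _.
  have hz : (`|1 - p| < 1)%R by rewrite ger0_norm ?subr_ge0 // ltrBlDr ltrDl.
  have := @cvg_geometric_series _ p _ hz.
  by rewrite subKr divff // gt_eqF.
have -> : (fun n => \sum_(0 <= i < n) (geom_pmf p i)%:E) = EFin \o series (geom_pmf p).
  by apply/funext => n /=; rewrite sumEFin.
rewrite EFin_lim; last by apply/cvg_ex; exists 1%R.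
by rewrite (cvg_lim _ Hs).
Qed.

Definition join_ff m n (u : {ffun 'I_m -> nat}) (v : {ffun 'I_n -> nat}) : {ffun 'I_(m + n) -> nat} :=
  [ffun j : 'I_(m + n) => match fintype.split j with inl i => u i | inr i => v i end].

Lemma split_lshift m n (i : 'I_m) : fintype.split (lshift n i) = inl i.
Proof. exact: (unsplitK (inl _ i)). Qed.

Lemma split_rshift m n (i : 'I_n) : fintype.split (rshift m i) = inr i.
Proof. exact: (unsplitK (inr _ i)). Qed.

Lemma join_ff_bij m n : set_bij [set: {ffun 'I_m -> nat} * {ffun 'I_n -> nat}] [set: {ffun 'I_(m + n) -> nat}]
  (fun p => join_ff p.1 p.2).
Proof.
apply: (@bijTT_can _ _ _ (fun x : {ffun 'I_(m + n) -> nat} => ([ffun i : 'I_m => x (lshift n i)], [ffun i : 'I_n => x (rshift m i)]))).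
- move=> [u v] /=; congr (_, _); apply/ffunP => i; rewrite !ffunE.
    by rewrite split_lshift.
  by rewrite split_rshift.
- move=> x; apply/ffunP => j; rewrite ffunE.
  by case: split_ordP => i -> ; rewrite ffunE.
Qed.

Lemma esum_split m n (a : {ffun 'I_(m + n) -> nat} -> \bar R) : (forall x, 0 <= a x) ->
  \esum_(x in [set: {ffun 'I_(m + n) -> nat}]) a x =
  \esum_(u in [set: {ffun 'I_m -> nat}]) \esum_(v in [set: {ffun 'I_n -> nat}]) a (join_ff u v).
Proof.
move=> a0; rewrite (reindex_esum _ _ _ _ (join_ff_bij m n)).
by rewrite (esum_pair (a := fun u v => a (join_ff u v))).
Qed.

End Esum.

Section Model.
Variable R : realType.

Definition bconst : R := @alpha_att R / 10 * ln 10.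

Lemma bconst_gt0 : 0 < bconst.
Proof.
rewrite /bconst /alpha_att; apply: mulr_gt0; first lra.
by apply: ln_gt0; lra.
Qed.

Lemma succ_probE (l : R) : succ_prob l = expR (- (bconst * l)).
Proof.
rewrite /succ_prob /powR ifF; last by apply/negbTE; rewrite gt_eqF //; lra.
by congr expR; rewrite /bconst; ring.
Qed.

Lemma succ_prob_in (l : R) : 0 <= l -> 0 < succ_prob l <= 1.
Proof.
move=> l0; rewrite succ_probE expR_gt0 /= expR_le1 oppr_le0.
by apply: mulr_ge0 => //; exact: ltW bconst_gt0.
Qed.

Lemma gfun_succ (k : nat) (l : R) : 1 - (1 - succ_prob l) ^+ k = gfun bconst k l.
Proof. by rewrite succ_probE. Qed.

Local Open Scope ereal_scope.

Lemma total_mass K (len : 'I_K -> R) : (forall j, 0 <= len j)%R ->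
  \esum_(x in [set: {ffun 'I_K -> nat}]) (joint_pmf len x)%:E = 1%:E.
Proof.
move=> l0; rewrite /joint_pmf (esum_prod_ffun (f := fun j n => geom_pmf (succ_prob (len j)) n) (s := fun=> 1%R)).
- by rewrite big1.
- by move=> j n; apply: geom_ge0; have /andP[/ltW -> ->] := succ_prob_in (l0 j).
- by move=> j; apply: esum_geom; exact: succ_prob_in.
Qed.

Lemma prod_ind K (x : {ffun 'I_K -> nat}) (k : nat) :
  (\prod_(j < K) ((x j <= k)%:R : R) = ((\max_(j < K) x j <= k)%:R))%R.
Proof.
case: (boolP (\max_(j < K) x j <= k)%N) => h.
  by rewrite big1 // => j _; rewrite (leq_trans (leq_bigmax j) h).
have [j hj] : exists j, ~~ (x j <= k)%N.
  apply/existsP; rewrite -negb_forall; apply: contra h => /forallP H.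
  by apply/bigmax_leqP => j _; exact: H j.
by rewrite (bigD1 j) //= (negbTE hj) mul0r.
Qed.

Lemma prob_le K (len : 'I_K -> R) (k : nat) : (forall j, 0 <= len j)%R ->
  \esum_(x in [set: {ffun 'I_K -> nat}]) (joint_pmf len x * ((\max_(j < K) x j) <= k)%:R)%:E
  = (\prod_j gfun bconst k (len j))%:E.
Proof.
move=> l0.
have hp j : (0 <= succ_prob (len j) <= 1)%R by have /andP[/ltW -> ->] := succ_prob_in (l0 j).
transitivity (\esum_(x in [set: {ffun 'I_K -> nat}])
   (\prod_j (geom_pmf (succ_prob (len j)) (x j) * (x j <= k)%:R))%:E).
  by apply: eq_esum => x _; rewrite big_split /= prod_ind.
rewrite (esum_prod_ffun (f := (fun j n => geom_pmf (succ_prob (len j)) n * (n <= k)%:R)%R) (s := (fun j => 1 - (1 - succ_prob (len j)) ^+ k)%R)).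
- by congr (_%:E); apply: eq_bigr => j _; rewrite gfun_succ.
- by move=> j n; apply: mulr_ge0; [exact: geom_ge0|exact: ler0n].
- by move=> j; apply: esum_geom_le.
Qed.

Lemma prob_gt K (len : 'I_K -> R) (k : nat) : (forall j, 0 <= len j)%R ->
  \esum_(x in [set: {ffun 'I_K -> nat}]) (joint_pmf len x * (k < (\max_(j < K) x j))%:R)%:E
  = (1 - \prod_j gfun bconst k (len j))%:E.
Proof.
move=> l0.
have hp j : (0 <= succ_prob (len j) <= 1)%R by have /andP[/ltW -> ->] := succ_prob_in (l0 j).
have pmf0 x : (0 <= joint_pmf len x)%R by apply: prodr_ge0 => j _; exact: geom_ge0.
have H := total_mass l0.
rewrite (eq_esum (b := fun x => (joint_pmf len x * (k < (\max_(j < K) x j))%:R)%:E +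
    (joint_pmf len x * ((\max_(j < K) x j) <= k)%:R)%:E)) in H; last first.
  move=> x _; rewrite -EFinD -mulrDr; congr (_%:E).
  by case: leqP => _; rewrite ?addr0 ?add0r mulr1.
rewrite esumD in H; last 2 first.
- by move=> x _; rewrite lee_fin; apply: mulr_ge0 => //; exact: ler0n.
- by move=> x _; rewrite lee_fin; apply: mulr_ge0 => //; exact: ler0n.
rewrite prob_le // in H.
by rewrite EFinB -H addeK.
Qed.

Lemma max_as_esum (c : R) (N : nat) : (0 <= c)%R ->
  \esum_(k in [set: nat]) (c * (k < N)%:R)%:E = (c * N%:R)%:E.
Proof.
move=> c0.
have a0 k : 0 <= (c * (k < N)%:R)%:E by rewrite lee_fin; apply: mulr_ge0 => //; exact: ler0n.
rewrite (esumID `I_N); last by move=> k _; exact: a0.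
rewrite [X in _ + X]esum1 ?adde0; last first.
  by move=> k [_ /=] /negP /negbTE ->; rewrite mulr0.
rewrite setTI esum_fset; [| exact: finite_II | by move=> i _; exact: a0].
rewrite -fsbig_ord sumEFin; congr (_%:E).
rewrite (eq_bigr (fun=> c)); last by move=> i _; rewrite ltn_ord mulr1.
by rewrite sumr_const card_ord mulr_natr.
Qed.

Lemma expect_max K (len : 'I_K -> R) : (forall j, 0 <= len j)%R ->
  \esum_(x in [set: {ffun 'I_K -> nat}]) (joint_pmf len x * (\max_(j < K) x j)%:R)%:E
  = \esum_(k in [set: nat]) (1 - \prod_j gfun bconst k (len j))%:E.
Proof.
move=> l0.
have hp j : (0 <= succ_prob (len j) <= 1)%R by have /andP[/ltW -> ->] := succ_prob_in (l0 j).
have pmf0 x : (0 <= joint_pmf len x)%R by apply: prodr_ge0 => j _; exact: geom_ge0.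
transitivity (\esum_(x in [set: {ffun 'I_K -> nat}]) \esum_(k in [set: nat])
    (joint_pmf len x * (k < (\max_(j < K) x j))%:R)%:E).
  by apply: eq_esum => x _; rewrite max_as_esum.
rewrite esum_swap; last by move=> x k; rewrite lee_fin; apply: mulr_ge0 => //; exact: ler0n.
by apply: eq_esum => k _; rewrite prob_gt.
Qed.

Lemma t_att_ge0 K (len : 'I_K -> R) : (0 <= t_att len)%R.
Proof.
rewrite /t_att; apply: divr_ge0; first exact: bigmax_ge_id.
by rewrite /light_speed; lra.
Qed.

Lemma expect_Tdone K (len : 'I_K -> R) : (forall j, 0 <= len j)%R ->
  expect len (T_done len) =
  (t_att len)%:E * \esum_(k in [set: nat]) (1 - \prod_j gfun bconst k (len j))%:E.
Proof.
move=> l0.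
have hp j : (0 <= succ_prob (len j) <= 1)%R by have /andP[/ltW -> ->] := succ_prob_in (l0 j).
have pmf0 x : (0 <= joint_pmf len x)%R by apply: prodr_ge0 => j _; exact: geom_ge0.
rewrite -expect_max // -esumZl; [|exact: t_att_ge0|]; last first.
  by move=> x; rewrite lee_fin; apply: mulr_ge0 => //; exact: ler0n.
apply: eq_esum => x _; rewrite /T_done -EFinM; congr (_%:E); ring.
Qed.

End Model.

Section Decay.
Variable R : realType.

Definition ff0 n : {ffun 'I_n -> nat} := [ffun => 0%N].

Definition Dt K (T : R) (imp : nat -> bool) (t : R) (x : {ffun 'I_K -> nat}) : R :=
  \prod_(i < K | (0 < i)%N && imp i) expR (- `|t * (x i)%:R - t * (x (prev_edge i))%:R| / T).

Lemma join_lo m n (u : {ffun 'I_m -> nat}) (v v' : {ffun 'I_n -> nat}) (j : 'I_(m + n)) :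
  (j < m)%N -> join_ff u v j = join_ff u v' j.
Proof.
move=> hj; rewrite !ffunE; case: split_ordP => k hk //.
by move: hj; rewrite hk /= ltnNge leq_addr.
Qed.

Lemma joint_pmf_join m n (d : 'I_m -> R) (l : 'I_n -> R) u v :
  joint_pmf (chain_len d l) (join_ff u v) = joint_pmf d u * joint_pmf l v.
Proof.
rewrite /joint_pmf big_split_ord; congr (_ * _); apply: eq_bigr => i _;
  by rewrite /chain_len ffunE ?split_lshift ?split_rshift.
Qed.

Lemma Dt_ge0 K T imp t (x : {ffun 'I_K -> nat}) : 0 <= Dt T imp t x.
Proof. by apply: prodr_ge0 => i _; exact: expR_ge0. Qed.

Lemma Dt_le1 K T imp t (x : {ffun 'I_K -> nat}) : 0 < T -> Dt T imp t x <= 1.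
Proof.
move=> T0; apply: prodr_ile1 => i _; rewrite expR_ge0 expR_le1 /=.
by rewrite mulNr oppr_le0; apply: divr_ge0 => //; exact: ltW.
Qed.

Lemma Dt_anti K T imp t1 t2 (x : {ffun 'I_K -> nat}) : 0 < T -> 0 <= t1 -> t1 <= t2 ->
  Dt T imp t2 x <= Dt T imp t1 x.
Proof.
move=> T0 t10 t12; apply: ler_prod => i _; rewrite expR_ge0 ler_expR /=.
rewrite !mulNr lerN2 ler_pM2r ?invr_gt0 // -!mulrBr !normrM.
by apply: ler_wpM2r => //; rewrite !ger0_norm // (le_trans t10).
Qed.

Local Open Scope ereal_scope.

Lemma expect_decay m n (d : 'I_m -> R) (l : 'I_n -> R) (T : R) (imp : nat -> bool) :
  (forall j, 0 <= d j)%R -> (forall j, 0 <= l j)%R -> (forall i, imp i -> (i < m)%N) ->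
  expect (chain_len d l) (decay T imp (chain_len d l)) =
  \esum_(u in [set: {ffun 'I_m -> nat}])
     (joint_pmf d u * Dt T imp (t_att (chain_len d l)) (join_ff u (ff0 n)))%:E.
Proof.
move=> d0 l0 himp.
have hd j : (0 <= succ_prob (d j) <= 1)%R by have /andP[/ltW -> ->] := succ_prob_in (d0 j).
have hl j : (0 <= succ_prob (l j) <= 1)%R by have /andP[/ltW -> ->] := succ_prob_in (l0 j).
have pmfd x : (0 <= joint_pmf d x)%R by apply: prodr_ge0 => j _; exact: geom_ge0.
have pmfl x : (0 <= joint_pmf l x)%R by apply: prodr_ge0 => j _; exact: geom_ge0.
rewrite /expect esum_split; last first.
  move=> x; rewrite lee_fin; apply: mulr_ge0; last exact: Dt_ge0.
  apply: prodr_ge0 => j _; apply: geom_ge0.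
  have cl0 : (0 <= chain_len d l j)%R by rewrite /chain_len; case: (fintype.split j).
  by have /andP[/ltW -> ->] := succ_prob_in cl0.
apply: eq_esum => u _.
transitivity (\esum_(v in [set: {ffun 'I_n -> nat}])
   ((joint_pmf d u * Dt T imp (t_att (chain_len d l)) (join_ff u (ff0 n)))%:E
     * (joint_pmf l v)%:E)).
  apply: eq_esum => v _; rewrite joint_pmf_join -EFinM; congr (_%:E).
  rewrite (_ : decay T imp (chain_len d l) (join_ff u v) =
      Dt T imp (t_att (chain_len d l)) (join_ff u (ff0 n))); first ring.
  rewrite /decay /Dt; apply: eq_bigr => i /andP[_ hi].
  have him := himp _ hi.
  have hp : (prev_edge i < m)%N by exact: leq_ltn_trans (leq_pred i) him.
  by rewrite (join_lo _ _ (ff0 n) him) (join_lo _ _ (ff0 n) hp).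
rewrite esumZl; [| by apply: mulr_ge0 => //; exact: Dt_ge0 | by move=> v; rewrite lee_fin].
by rewrite total_mass // mule1.
Qed.

End Decay.

Section Final.
Variable R : realType.

Lemma chain_len_ge0 m n (d : 'I_m -> R) (l : 'I_n -> R) :
  (forall j, 0 <= d j) -> (forall i, 0 <= l i) -> forall j, 0 <= chain_len d l j.
Proof. by move=> d0 l0 j; rewrite /chain_len; case: (fintype.split j). Qed.

Lemma bigmax_chain m n (d : 'I_m -> R) (l : 'I_n.+1 -> R) L :
  (forall i, 0 <= l i) -> \sum_i l i = L ->
  \big[Num.max/0]_(j < m + n.+1) chain_len d (fun _ : 'I_n.+1 => L / n.+1%:R) j <=
  \big[Num.max/0]_(j < m + n.+1) chain_len d l j.
Proof.
move=> l0 sL.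
set B := \big[Num.max/0]_(j < m + n.+1) chain_len d l j.
have hl i : l i <= B.
  have := le_bigmax 0 (chain_len d l) (rshift m i).
  by rewrite /chain_len split_rshift.
apply: bigmax_le; first exact: bigmax_ge_id.
move=> j _; rewrite {1}/chain_len; case E: (fintype.split j) => [a|b].
  have := le_bigmax 0 (chain_len d l) j.
  by rewrite {1}/chain_len E.
rewrite ler_pdivrMr ?ltr0Sn // -sL.
apply: le_trans (ler_sum _ (fun i _ => hl i)) _.
by rewrite sumr_const card_ord mulr_natr.
Qed.

Lemma t_att_chain m n (d : 'I_m -> R) (l : 'I_n.+1 -> R) L :
  (forall i, 0 <= l i) -> \sum_i l i = L ->
  t_att (chain_len d (fun _ : 'I_n.+1 => L / n.+1%:R)) <= t_att (chain_len d l).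
Proof.
move=> l0 sL; rewrite /t_att ler_pM2r; first exact: bigmax_chain.
by rewrite invr_gt0 /light_speed; lra.
Qed.

Lemma t_att_chain_gt0 m n (d : 'I_m -> R) L : 0 < L ->
  0 < t_att (chain_len d (fun _ : 'I_n.+1 => L / n.+1%:R)).
Proof.
move=> L0; rewrite /t_att; apply: divr_gt0; last by rewrite /light_speed; lra.
apply: lt_le_trans (le_bigmax 0 _ (rshift m ord0)).
by rewrite /chain_len split_rshift; apply: divr_gt0 => //; exact: ltr0Sn.
Qed.

Lemma G_split m n (d : 'I_m -> R) (l : 'I_n -> R) k :
  \prod_(j < m + n) gfun (@bconst R) k (chain_len d l j) =
  (\prod_(i < m) gfun (@bconst R) k (d i)) * \prod_(i < n) gfun (@bconst R) k (l i).
Proof.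
rewrite big_split_ord; congr (_ * _); apply: eq_bigr => i _;
  by rewrite /chain_len ?split_lshift ?split_rshift.
Qed.

Lemma gfun_le1 (b : R) k l : 0 <= b -> 0 <= l -> gfun b k l <= 1.
Proof.
move=> b0 l0; rewrite /gfun gerBl; apply: exprn_ge0.
rewrite subr_ge0 expR_le1 oppr_le0; exact: mulr_ge0.
Qed.

End Final.

Unset Implicit Arguments.

Theorem mainTheorem6 (R : realType) (M N : nat) (F T L : R)
    (d : 'I_M.-1 -> R) (l : 'I_N.+1 -> R) :
  (0 < M)%N ->
  0 <= F <= 1 ->
  0 < T ->
  (forall j, 0 <= d j) ->
  (forall i, 0 <= l i) ->
  \sum_(i < N.+1) l i = L ->
  SKR F T (imperfect_first M) (chain_len d l)
    <= SKR F T (imperfect_first M) (chain_len d (fun _ : 'I_N.+1 => L / N.+1%:R)).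
Proof.
move=> M0 hF T0 d0 l0 sL.
set e := fun _ : 'I_N.+1 => L / N.+1%:R.
have L0 : 0 <= L by rewrite -sL; apply: sumr_ge0.
have [LZ|Lnz] := eqVneq L 0.
  have -> : l = e.
    apply/funext => i; rewrite /e LZ mul0r.
    by apply: (psumr_eq0P (P := xpredT)) => // ; rewrite sL.
  exact: lexx.
have Lpos : 0 < L by rewrite lt0r Lnz.
have e0 i : 0 <= e i by rewrite /e; apply: divr_ge0 => //; exact: ler0n.
set lenl := chain_len d l.
set lene := chain_len d e.
have hl := chain_len_ge0 d0 l0.
have he := chain_len_ge0 d0 e0.
have b0 := @bconst_gt0 R.
set tl := t_att lenl.
set te := t_att lene.
have tle : te <= tl by exact: t_att_chain.
have tepos : 0 < te by exact: t_att_chain_gt0.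
pose G (len : 'I_(M.-1 + N.+1) -> R) k := \prod_j gfun (@bconst R) k (len j).
have Gle k : G lenl k <= G lene k.
  rewrite /G /lenl /lene !G_split; apply: ler_wpM2l.
    by apply: prodr_ge0 => i _; apply: gfun_ge0 => //; exact: ltW.
  rewrite /e prodr_const card_ord; exact: jensen_g.
have Gl1 k : G lenl k <= 1.
  apply: prodr_ile1 => j _; rewrite gfun_ge0 ?gfun_le1 //; exact: ltW.
have Ge0 k : 0 <= G lene k.
  by apply: prodr_ge0 => j _; rewrite gfun_ge0 //; exact: ltW.
pose S len := (\esum_(k in [set: nat]) (1 - G len k)%:E)%E.
have SeSl : (S lene <= S lenl)%E.
  apply: le_esum => k _; rewrite lee_fin lerD2l lerN2; exact: Gle.
have Se1 : (1 <= S lene)%E.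
  apply: esum_ge; exists [set 0%N]; first by split => //; exact: finite_set1.
  rewrite fsbig_set1 lee_fin /G.
  rewrite (eq_bigr (fun=> 0)); last by move=> j _; rewrite /gfun expr0 subrr.
  by rewrite prodr_const card_ord expr0n addnS /= subr0.
have El : expect lenl (T_done lenl) = (tl%:E * S lenl)%E by exact: expect_Tdone.
have Ee : expect lene (T_done lene) = (te%:E * S lene)%E by exact: expect_Tdone.
have EeEl : (expect lene (T_done lene) <= expect lenl (T_done lenl))%E.
  rewrite El Ee; apply: lee_pmul => //; first by rewrite lee_fin ltW.
  exact: le_trans Se1.
have Eepos : (0 < expect lene (T_done lene))%E.
  rewrite Ee; apply: (@lt_le_trans _ _ (te%:E * 1)%E); first by rewrite mule1 lte_fin.
  by rewrite lee_pmul2l // lte_fin.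
have El0 : (0 <= expect lenl (T_done lenl))%E by exact: le_trans (ltW Eepos) EeEl.
have rate0 : 0 <= ent_rate lenl by rewrite /ent_rate invr_ge0 fine_ge0.
have rate_le : ent_rate lenl <= ent_rate lene.
  rewrite /ent_rate.
  have [Elfin|Elinf] := boolP (expect lenl (T_done lenl) \is a fin_num).
    have Eefin : expect lene (T_done lene) \is a fin_num.
      rewrite ge0_fin_numE; last exact: ltW.
      by apply: le_lt_trans EeEl _; rewrite -ge0_fin_numE.
    have fe : 0 < fine (expect lene (T_done lene)).
      by apply: fine_gt0; rewrite Eepos /= -ge0_fin_numE // ltW.
    rewrite lef_pV2 ?posrE //; last exact: lt_le_trans fe (fine_le Eefin Elfin EeEl).
    exact: fine_le.
  have -> : expect lenl (T_done lenl) = +oo%E.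
    by move: Elinf; rewrite ge0_fin_numE // -leNgt leye_eq => /eqP.
  by rewrite /= invr0 invr_ge0 fine_ge0 // ltW.
have himp i : imperfect_first M i -> (i < M.-1)%N by [].
pose Phi t := (\esum_(u in [set: {ffun 'I_M.-1 -> nat}])
     (joint_pmf d u * Dt T (imperfect_first M) t (join_ff u (ff0 N.+1)))%:E)%E.
have Dl : expect lenl (decay T (imperfect_first M) lenl) = Phi tl by exact: expect_decay.
have De : expect lene (decay T (imperfect_first M) lene) = Phi te by exact: expect_decay.
have hd j : 0 <= succ_prob (d j) <= 1 by have /andP[/ltW -> ->] := succ_prob_in (d0 j).
have pmfd x : 0 <= joint_pmf d x by apply: prodr_ge0 => j _; exact: geom_ge0.
have Phi0 t : (0 <= Phi t)%E.
  by apply: esum_ge0 => u _; rewrite lee_fin mulr_ge0 // Dt_ge0.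
have Phi1 t : (Phi t <= 1)%E.
  rewrite -(total_mass d0); apply: le_esum => u _; rewrite lee_fin.
  by rewrite -{2}(mulr1 (joint_pmf d u)) ler_wpM2l // Dt_le1.
have Phile : (Phi tl <= Phi te)%E.
  apply: le_esum => u _; rewrite lee_fin ler_wpM2l // Dt_anti //; exact: ltW.
have fin t : Phi t \is a fin_num.
  by rewrite ge0_fin_numE // (le_lt_trans (Phi1 t)) // ltry.
have fl0 : 0 <= fine (Phi tl) by exact: fine_ge0.
have fle : fine (Phi tl) <= fine (Phi te) by exact: fine_le.
have fe1 : fine (Phi te) <= 1 by rewrite -lee_fin fineK.
have w0 : `|werner_param F| <= 1.
  rewrite /werner_param ler_norml; case/andP: hF => F0 F1; apply/andP; split; lra.
have skf_le : SKF F T (imperfect_first M) lenl <= SKF F T (imperfect_first M) lene.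
  have fe0 : 0 <= fine (Phi te) := le_trans fl0 fle.
  rewrite /SKF /mean_w Dl De /=; apply: skf_mono.
    rewrite !normrM !normrX (ger0_norm fl0) (ger0_norm fe0).
    by apply: ler_wpM2l; [exact: exprn_ge0 (normr_ge0 _) | exact: fle].
  rewrite normrM normrX (ger0_norm fe0) -(mulr1 1).
  apply: ler_pM; [exact: exprn_ge0 (normr_ge0 _) | exact: fe0 | | exact: fe1].
  exact: exprn_ile1 (normr_ge0 _) w0.
have skf0 : 0 <= SKF F T (imperfect_first M) lenl by rewrite /SKF /= le_max lexx.
rewrite /SKR; exact: ler_pM.
Qed.
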